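(* Let $T>0$ and let $\alpha,\beta:\mathbb{R}\to\mathbb{R}$ be continuous $T$-periodic functions such that $\alpha=0$ on $[\tfrac T2,T]$, $\beta=0$ on $[0,\tfrac T2]$, $\alpha(t)>0$ for $t\in(0,\tfrac T2)$ and $\beta(t)>0$ for $t\in(\tfrac T2,T)$. Set $A:=\int_0^T\alpha(t)\,dt$ and $B:=\int_0^T\beta(t)\,dt$, and suppose $AB>4$. Then the system \[ u'=\alpha(t)\,u(1-v),\qquad v'=\beta(t)\,v(-1+u) \] possesses exactly two $2T$-periodic coexistence states with minimal period $2T$.
   Context: A coexistence state is a solution $(u,v)$ defined on $\mathbb{R}$ with $u(t)>0$ and $v(t)>0$ for all $t$. The constant solution $(u,v)=(1,1)$ is the unique $T$-periodic coexistence state. *)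

(* Defs.v *)
From Stdlib Require Import Reals.
From Coquelicot Require Import Coquelicot.
Open Scope R_scope.

Definition is_solution (alpha beta : R -> R) (u v : R -> R) : Prop :=
  forall t : R,
    is_derive u t (alpha t * u t * (1 - v t)) /\
    is_derive v t (beta t * v t * (-1 + u t)).

Definition coexistence_state (alpha beta : R -> R) (u v : R -> R) : Prop :=
  is_solution alpha beta u v /\ (forall t, 0 < u t /\ 0 < v t).

Definition is_period_pair (u v : R -> R) (p : R) : Prop :=
  forall t : R, u (t + p) = u t /\ v (t + p) = v t.

Definition minimal_period_pair (u v : R -> R) (p : R) : Prop :=
  0 < p /\ is_period_pair u v p /\
  (forall q : R, 0 < q < p -> ~ is_period_pair u v q).

Definition periodic (f : R -> R) (T : R) : Prop := forall t, f (t + T) = f t.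

(* Main.v *)
Require Import Defs.
From Stdlib Require Import Reals Lra Lia ZArith FunctionalExtensionality.
From Coquelicot Require Import Coquelicot.
Open Scope R_scope.

Lemma D_mul (f g : R -> R) x df dg : is_derive f x df -> is_derive g x dg ->
  is_derive (fun t => f t * g t) x (df * g x + f x * dg).
Proof. intros H1 H2. apply (is_derive_mult f g x df dg H1 H2). intros; apply Rmult_comm. Qed.

Lemma D_exp (f : R -> R) x df : is_derive f x df ->
  is_derive (fun t => exp (f t)) x (df * exp (f x)).
Proof. intros H. apply (is_derive_comp exp f x (exp (f x)) df). apply is_derive_exp. exact H. Qed.

Lemma D_eq (f : R -> R) x (l lp : R) : is_derive f x l -> @eq R l lp -> is_derive f x lp.
Proof. intros H <-; exact H. Qed.

Lemma cont_ex_RInt (f : R -> R) a b : (forall x, continuous f x) -> ex_RInt f a b.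
Proof. intros H. apply (@ex_RInt_continuous R_CompleteNormedModule). intros; apply H. Qed.

Lemma RInt_ch (f : R -> R) a b c : (forall x, continuous f x) ->
  RInt f a b + RInt f b c = RInt f a c.
Proof. intros H. rewrite <- (RInt_Chasles f a b c) by (apply cont_ex_RInt; auto). reflexivity. Qed.

Lemma RInt_eq_on (f g : R -> R) a b : a <= b -> (forall x, a <= x <= b -> f x = g x) ->
  RInt f a b = RInt g a b.
Proof. intros Hab H. apply RInt_ext. intros x [H1 H2].
  rewrite Rmin_left in H1 by lra. rewrite Rmax_right in H2 by lra. apply H; lra. Qed.

Lemma RInt_zero_on (f : R -> R) a b : a <= b -> (forall x, a <= x <= b -> f x = 0) ->
  RInt f a b = 0.
Proof. intros Hab H. rewrite (RInt_eq_on f (fun _ => 0) a b) by auto.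
  rewrite RInt_const. unfold scal; simpl; unfold mult; simpl. ring. Qed.

Lemma RInt_shift (f : R -> R) a b c : (forall x, continuous f x) ->
  RInt (fun y => f (y + c)) a b = RInt f (a + c) (b + c).
Proof. intros H.
  assert (E := @RInt_comp_lin R_CompleteNormedModule f 1 c a b).
  rewrite !Rmult_1_l in E. rewrite <- E by (apply cont_ex_RInt; auto).
  apply RInt_ext. intros x _. unfold scal; simpl; unfold mult; simpl. rewrite !Rmult_1_l. reflexivity.
Qed.

Lemma RInt_opp' (f : R -> R) a b : (forall x, continuous f x) ->
  RInt (fun y => - f y) a b = - RInt f a b.
Proof. intros H. apply (RInt_opp f a b). apply cont_ex_RInt; auto. Qed.

Lemma RInt_deriv (f : R -> R) a t : (forall x, continuous f x) ->
  is_derive (fun s => RInt f a s) t (f t).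
Proof. intros H. apply is_derive_RInt with a. apply filter_forall. intros; apply RInt_correct, cont_ex_RInt; auto. apply H. Qed.

Lemma deriv_zero_const (f f' : R -> R) a b :
  (forall c, a <= c <= b -> is_derive f c (f' c)) -> (forall c, a <= c <= b -> f' c = 0) ->
  forall t, a <= t <= b -> f t = f a.
Proof. intros Hd H0 t Ht. destruct (Req_dec t a) as [->|Hne]; [reflexivity|].
  destruct (MVT_cor2 f f' a t) as [c [Hc1 Hc2]]. lra. intros c Hc. apply is_derive_Reals, Hd; lra.
  rewrite H0 in Hc1 by lra. lra. Qed.

Lemma periodic_nat (P : R -> Prop) p : (forall t, P t <-> P (t + p)) ->
  forall n t, P t <-> P (t + INR n * p).
Proof. intros H n. induction n as [|n IH]; intros t.
  - simpl. rewrite Rmult_0_l, Rplus_0_r. tauto.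
  - rewrite S_INR. replace (t + (INR n + 1) * p) with ((t + INR n * p) + p) by ring.
    rewrite <- H. apply IH. Qed.

Lemma periodic_reduce (P : R -> Prop) p : 0 < p -> (forall t, P t <-> P (t + p)) ->
  (forall t, 0 <= t < p -> P t) -> forall t, P t.
Proof. intros Hp H Hb t.
  destruct (archimed (t / p)) as [H1 H2].
  set (z := (up (t / p) - 1)%Z).
  assert (Ht : t = (t / p) * p) by (field; lra).
  set (x := t / p) in *.
  assert (Hz : IZR z = IZR (up x) - 1) by (unfold z; rewrite minus_IZR; reflexivity).
  set (s := t - IZR z * p).
  assert (Hs : 0 <= s < p) by (unfold s; rewrite Hz; split; nra).
  destruct (Z_le_gt_dec 0 z) as [Hz0|Hz0].
  - destruct (Z_of_nat_complete z Hz0) as [m Hm].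
    assert (IZR z = INR m) by (rewrite Hm, <- INR_IZR_INZ; reflexivity).
    replace t with (s + INR m * p) by (unfold s; rewrite <- H0; ring).
    apply periodic_nat; auto.
  - assert (Hz1 : (0 <= - z)%Z) by lia.
    destruct (Z_of_nat_complete (-z) Hz1) as [m Hm].
    assert (IZR z = - INR m) by (rewrite INR_IZR_INZ, <- Hm, opp_IZR; ring).
    apply (periodic_nat P p H m t). replace (t + INR m * p) with s by (unfold s; rewrite H0; ring).
    auto.
Qed.

Ltac Req := match goal with |- ?a = ?b => change (@eq R a b) end.

Record hyps (T : R) (alpha beta : R -> R) : Prop := mkH {
  hT : 0 < T;
  hca : forall t, continuous alpha t;
  hcb : forall t, continuous beta t;
  hpa : periodic alpha T;
  hpb : periodic beta T;
  ha0 : forall t, T/2 <= t <= T -> alpha t = 0;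
  hb0 : forall t, 0 <= t <= T/2 -> beta t = 0;
  hapos : forall t, 0 < t < T/2 -> 0 < alpha t;
  hbpos : forall t, T/2 < t < T -> 0 < beta t }.

Lemma D_shift c t : is_derive (fun s => s + c) t 1.
Proof. auto_derive; auto; ring. Qed.

Lemma D_compshift (f : R -> R) c t df : is_derive f (t + c) df -> is_derive (fun s => f (s + c)) t df.
Proof. intros H. apply (D_eq _ _ _ _ (is_derive_comp f (fun s => s + c) t df 1 H (D_shift c t))).
  unfold scal; simpl; unfold mult; simpl; ring. Qed.

Lemma shift_sol T alpha beta u v : periodic alpha T -> periodic beta T -> is_solution alpha beta u v ->
  is_solution alpha beta (fun t => u (t + T)) (fun t => v (t + T)).
Proof. intros pa pb Hs t. destruct (Hs (t+T)) as [H1 H2]. rewrite pa in H1. rewrite pb in H2. split.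
  - apply D_compshift; auto.
  - apply D_compshift; auto. Qed.

Lemma int_facts T alpha beta (H : hyps T alpha beta) :
  RInt alpha 0 (T/2) = RInt alpha 0 T /\ RInt beta (T/2) T = RInt beta 0 T /\
  0 < RInt alpha 0 T /\ 0 < RInt beta 0 T.
Proof. destruct H.
  assert (E1 : RInt alpha 0 (T/2) = RInt alpha 0 T).
  { rewrite <- (RInt_ch alpha 0 (T/2) T) by auto. rewrite (RInt_zero_on alpha (T/2) T); auto. symmetry; apply Rplus_0_r. lra. }
  assert (E2 : RInt beta (T/2) T = RInt beta 0 T).
  { rewrite <- (RInt_ch beta 0 (T/2) T) by auto. rewrite (RInt_zero_on beta 0 (T/2)); auto. symmetry; apply Rplus_0_l. lra. }
  split; [auto|split;[auto|split]].
  - rewrite <- E1. apply RInt_gt_0. lra. auto. intros; auto.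
  - rewrite <- E2. apply RInt_gt_0. lra. auto. intros; auto.
Qed.

Lemma one_period T alpha beta (H : hyps T alpha beta) u v : is_solution alpha beta u v ->
 (forall t, 0 <= t <= T/2 -> v t = v 0 /\ u t = u 0 * exp ((1 - v 0) * RInt alpha 0 t)) /\
 (forall t, T/2 <= t <= T -> u t = u (T/2) /\ v t = v (T/2) * exp ((u (T/2) - 1) * RInt beta (T/2) t)).
Proof.
 intros Hs. destruct H.
 assert (Hv: forall t, 0 <= t <= T/2 -> v t = v 0).
 { apply (deriv_zero_const v (fun c => beta c * v c * (-1 + u c))). intros; apply Hs.
   intros c Hc; rewrite hb1 by lra; ring. }
 assert (Hu: forall t, T/2 <= t <= T -> u t = u (T/2)).
 { apply (deriv_zero_const u (fun c => alpha c * u c * (1 - v c))). intros; apply Hs.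
   intros c Hc; rewrite ha1 by lra; ring. }
 split.
 - intros t Ht. split. auto.
   set (w := fun s => u s * exp (- (1 - v 0) * RInt alpha 0 s)).
   assert (Hw : w t = w 0).
   { apply (deriv_zero_const w (fun c => alpha c * u c * (1 - v c) * exp (- (1 - v 0) * RInt alpha 0 c)
        + u c * ((- (1 - v 0) * alpha c) * exp (- (1 - v 0) * RInt alpha 0 c))) 0 (T/2)); auto.
     intros c Hc. apply (D_mul u (fun s => exp (- (1 - v 0) * RInt alpha 0 s))). apply Hs.
     apply (D_exp (fun s => - (1 - v 0) * RInt alpha 0 s)). apply (is_derive_scal (fun s => RInt alpha 0 s)).
     apply RInt_deriv; auto.
     intros c Hc. rewrite Hv by auto. ring. }
   unfold w in Hw. rewrite RInt_point in Hw. change (@zero R_NormedModule) with 0 in Hw.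
   rewrite Rmult_0_r, exp_0, Rmult_1_r in Hw. rewrite <- Hw.
   rewrite Rmult_assoc, <- exp_plus. replace (_ + _) with 0 by ring. rewrite exp_0; ring.
 - intros t Ht. split. auto.
   set (w := fun s => v s * exp (- (u (T/2) - 1) * RInt beta (T/2) s)).
   assert (Hw : w t = w (T/2)).
   { apply (deriv_zero_const w (fun c => beta c * v c * (-1 + u c) * exp (- (u (T/2) - 1) * RInt beta (T/2) c)
        + v c * ((- (u (T/2) - 1) * beta c) * exp (- (u (T/2) - 1) * RInt beta (T/2) c))) (T/2) T); auto.
     intros c Hc. apply (D_mul v (fun s => exp (- (u (T/2) - 1) * RInt beta (T/2) s))). apply Hs.
     apply (D_exp (fun s => - (u (T/2) - 1) * RInt beta (T/2) s)). apply (is_derive_scal (fun s => RInt beta (T/2) s)).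
     apply RInt_deriv; auto.
     intros c Hc. rewrite (Hu c) by auto. ring. }
   unfold w in Hw. rewrite RInt_point in Hw. change (@zero R_NormedModule) with 0 in Hw.
   rewrite Rmult_0_r, exp_0, Rmult_1_r in Hw. rewrite <- Hw.
   rewrite Rmult_assoc, <- exp_plus. replace (_ + _) with 0 by ring. rewrite exp_0; ring.
Qed.

Lemma one_period_vals T alpha beta (H : hyps T alpha beta) u v : is_solution alpha beta u v ->
  u T = u 0 * exp ((1 - v 0) * RInt alpha 0 T) /\ v T = v 0 * exp ((u T - 1) * RInt beta 0 T).
Proof. intros Hs. pose proof (hT _ _ _ H) as HT.
  destruct (one_period T alpha beta H u v Hs) as [P1 P2].
  destruct (int_facts T alpha beta H) as [E1 [E2 _]].
  destruct (P2 T) as [Q1 Q2]. lra. destruct (P1 (T/2)) as [R1 R2]. lra.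
  split. rewrite Q1, R2, E1. reflexivity.
  rewrite Q2, E2, R1, Q1. reflexivity.
Qed.

Lemma agree01 T alpha beta (H : hyps T alpha beta) u v u' v' :
  is_solution alpha beta u v -> is_solution alpha beta u' v' -> u 0 = u' 0 -> v 0 = v' 0 ->
  forall t, 0 <= t <= T -> u t = u' t /\ v t = v' t.
Proof. intros Hs Hs' E1 E2 t Ht. pose proof (hT _ _ _ H) as HT.
  destruct (one_period T alpha beta H u v Hs) as [P1 P2].
  destruct (one_period T alpha beta H u' v' Hs') as [P1' P2'].
  assert (Hh : u (T/2) = u' (T/2) /\ v (T/2) = v' (T/2)).
  { destruct (P1 (T/2)) as [a1 a2]. lra. destruct (P1' (T/2)) as [b1 b2]. lra.
    rewrite a1, a2, b1, b2, E1, E2. auto. }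
  destruct (Rle_lt_dec t (T/2)).
  - destruct (P1 t) as [a1 a2]. lra. destruct (P1' t) as [b1 b2]. lra.
    rewrite a1, a2, b1, b2, E1, E2. auto.
  - destruct (P2 t) as [a1 a2]. lra. destruct (P2' t) as [b1 b2]. lra.
    rewrite a1, a2, b1, b2. destruct Hh as [-> ->]. auto.
Qed.

Lemma determined T alpha beta (H : hyps T alpha beta) u v u' v' :
  is_solution alpha beta u v -> is_solution alpha beta u' v' ->
  is_period_pair u v (2*T) -> is_period_pair u' v' (2*T) -> u 0 = u' 0 -> v 0 = v' 0 ->
  u = u' /\ v = v'.
Proof. intros Hs Hs' Pp Pp' E1 E2. pose proof (hT _ _ _ H) as HT.
  assert (A0 := agree01 T alpha beta H u v u' v' Hs Hs' E1 E2).
  assert (A1 := agree01 T alpha beta H _ _ _ _ (shift_sol T alpha beta u v (hpa _ _ _ H) (hpb _ _ _ H) Hs)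
     (shift_sol T alpha beta u' v' (hpa _ _ _ H) (hpb _ _ _ H) Hs')).
  cbv beta in A1. rewrite !Rplus_0_l in A1. destruct (A0 T) as [F1 F2]. lra. specialize (A1 F1 F2).
  assert (Hall : forall t, u t = u' t /\ v t = v' t).
  { apply (periodic_reduce _ (2*T)). lra.
    intros t. destruct (Pp t) as [-> ->]. destruct (Pp' t) as [-> ->]. tauto.
    intros t Ht. destruct (Rle_lt_dec t T). apply A0; lra.
    replace t with ((t - T) + T) by ring. apply A1; lra. }
  split; apply functional_extensionality; intros t; apply Hall.
Qed.

Definition wf (x : R) := (1 - exp (- x)) / (1 + exp (- x)).

Lemma sinh_gt z : 0 < z -> 2 * z < exp z - exp (- z).
Proof. intros Hz.
  destruct (MVT_cor2 (fun s => exp s - exp (- s) - 2 * s) (fun s => exp s + exp (- s) - 2) 0 z) as [c [Hc1 Hc2]].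
  lra. intros c _. apply is_derive_Reals. auto_derive; auto. ring.
  rewrite Ropp_0, exp_0 in Hc1.
  assert (0 < exp c + exp (- c) - 2).
  { rewrite exp_Ropp. assert (1 < exp c) by (rewrite <- exp_0; apply exp_increasing; lra).
    assert (exp c + / exp c - 2 = (exp c - 1) ^ 2 / exp c) by (field; lra).
    rewrite H0. apply Rdiv_lt_0_compat. nra. lra. }
  nra. Qed.

Lemma wf_deriv c : is_derive wf c (2 * exp (- c) / (1 + exp (- c)) ^ 2).
Proof. unfold wf. pose proof (exp_pos (- c)). auto_derive. lra. field. lra. Qed.

Lemma rho_dec x y : 0 < x -> x < y -> x * wf y < y * wf x.
Proof. intros Hx Hxy.
  set (g := fun t => wf t / t).
  destruct (MVT_cor2 g (fun t => (t * (2 * exp (- t) / (1 + exp (- t)) ^ 2) - wf t) / t ^ 2) x y) as [c [Hc1 Hc2]].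
  lra.
  { intros c Hc. apply is_derive_Reals. unfold g.
    apply (D_eq _ _ ((2 * exp (- c) / (1 + exp (- c)) ^ 2) * / c + wf c * (- / c ^ 2))).
    apply (D_mul wf (fun t => / t)). apply wf_deriv. auto_derive; [lra| field; lra].
    assert (1 + exp (-c) <> 0) by (pose proof (exp_pos (-c)); lra).
    field; split; lra. }
  assert (Hneg : (c * (2 * exp (- c) / (1 + exp (- c)) ^ 2) - wf c) / c ^ 2 < 0).
  { apply Rdiv_neg_pos; [|nra]. unfold wf.
    pose proof (sinh_gt c ltac:(lra)) as Hs. rewrite (exp_Ropp c) in *.
    set (e := exp c) in *. assert (1 < e) by (unfold e; rewrite <- exp_0; apply exp_increasing; lra).
    assert (Eq : c * (2 * / e / (1 + / e) ^ 2) - (1 - / e) / (1 + / e) = (2 * c * e - (e * e - 1)) / (e + 1) ^ 2)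
      by (field; lra).
    rewrite Eq. apply Rdiv_neg_pos; [|nra].
    assert (2 * c * e < (e - / e) * e) by nra.
    replace ((e - / e) * e) with (e * e - 1) in H0 by (field; lra). lra. }
  unfold g in Hc1.
  assert (wf y / y < wf x / x) by nra.
  apply (Rmult_lt_compat_r (x * y)) in H; [|nra].
  replace (wf y / y * (x * y)) with (x * wf y) in H by (field; lra).
  replace (wf x / x * (x * y)) with (y * wf x) in H by (field; lra). exact H.
Qed.

Lemma wf_incr x y : x < y -> wf x < wf y.
Proof. intros H. unfold wf. assert (exp (- y) < exp (- x)) by (apply exp_increasing; lra).
  pose proof (exp_pos (-x)); pose proof (exp_pos (-y)).
  apply (Rmult_lt_reg_r ((1 + exp (-x)) * (1 + exp (-y)))). nra.
  replace ((1 - exp (- x)) / (1 + exp (- x)) * ((1 + exp (- x)) * (1 + exp (- y)))) with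
    ((1 - exp (- x)) * (1 + exp (- y))) by (field; lra).
  replace ((1 - exp (- y)) / (1 + exp (- y)) * ((1 + exp (- x)) * (1 + exp (- y)))) with
    ((1 - exp (- y)) * (1 + exp (- x))) by (field; lra).
  nra. Qed.

Lemma wf_0 : wf 0 = 0.
Proof. unfold wf. rewrite Ropp_0, exp_0. field. Qed.

Lemma wf_bounds x : 0 < x -> 0 < wf x < 1.
Proof. intros H. pose proof (wf_incr 0 x H). rewrite wf_0 in H0. split; auto.
  unfold wf. pose proof (exp_pos (-x)). apply (Rmult_lt_reg_r (1 + exp (-x))). lra.
  replace ((1 - exp (- x)) / (1 + exp (- x)) * (1 + exp (- x))) with (1 - exp (-x)) by (field; lra). lra. Qed.

Definition eqs (A B a b : R) := 1 - a = (1 + a) * exp (- (A * b)) /\ 1 - b = (1 + b) * exp (- (B * a)).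

Lemma eq_to_w b x : 1 - b = (1 + b) * exp (- x) -> b = wf x.
Proof. intros H. unfold wf. pose proof (exp_pos (-x)). apply (Rmult_eq_reg_r (1 + exp (-x))); [|lra].
  field_simplify; [|lra]. lra. Qed.

Lemma uniq_pos A B a b a' b' : 0 < A -> 0 < B -> eqs A B a b -> eqs A B a' b' ->
  0 < a -> 0 < b -> 0 < a' -> 0 < b' -> a = a' /\ b = b'.
Proof. intros HA HB [E1 E2] [E1' E2'] Ha Hb Ha' Hb'.
  apply eq_to_w in E1, E2, E1', E2'.
  assert (key : forall a b a' b', a = wf (A * b) -> b = wf (B * a) -> a' = wf (A * b') -> b' = wf (B * a') ->
     0 < a -> 0 < b -> a < a' -> False).
  { clear -HA HB. intros a b a' b' E1 E2 E1' E2' Ha Hb Hlt.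
    assert (b < b') by (rewrite E2, E2'; apply wf_incr; nra).
    pose proof (rho_dec (A * b) (A * b') ltac:(nra) ltac:(nra)).
    pose proof (rho_dec (B * a) (B * a') ltac:(nra) ltac:(nra)).
    rewrite <- E1, <- E1' in H0. rewrite <- E2, <- E2' in H1. nra. }
  destruct (Rtotal_order a a') as [Hl|[He|Hg]].
  - exfalso; apply (key a b a' b'); auto.
  - split; auto. rewrite E2, E2', He; auto.
  - exfalso; apply (key a' b' a b); auto.
Qed.

Definition Ef A B a := (1 + a) * exp (- (A * wf (B * a))) - (1 - a).

Lemma wf_eq x : 1 - wf x = (1 + wf x) * exp (- x).
Proof. unfold wf. pose proof (exp_pos (-x)). field. lra. Qed.

Lemma exist_pos A B : 0 < A -> 0 < B -> A * B > 4 ->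
  exists a b, 0 < a < 1 /\ 0 < b < 1 /\ eqs A B a b.
Proof.
  intros HA HB HAB.
  assert (D0 : is_derive (Ef A B) 0 (2 - A*B/2)).
  { unfold Ef, wf. auto_derive; rewrite !Rmult_0_r, Ropp_0, exp_0. lra.
    match goal with |- ?a = ?b => change (@eq R a b) end. replace (1 + - (1)) with 0 by ring. rewrite !Rmult_0_l, ?Rmult_0_r, ?Ropp_0, ?exp_0. field. }
  apply is_derive_Reals in D0.
  destruct (D0 ((A*B/2 - 2)/2) ltac:(lra)) as [d Hd].
  pose proof (cond_pos d) as Hdp.
  set (h := Rmin (d/2) (1/2)).
  assert (Hh1 : 0 < h) by (unfold h; apply Rmin_glb_lt; lra).
  assert (Hh2 : h <= d/2) by (unfold h; apply Rmin_l).
  assert (Hh3 : h <= 1/2) by (unfold h; apply Rmin_r).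
  specialize (Hd h ltac:(lra) ltac:(rewrite Rabs_pos_eq; lra)).
  assert (E0 : Ef A B 0 = 0) by (unfold Ef; rewrite Rmult_0_r, wf_0, Rmult_0_r, Ropp_0, exp_0; ring).
  rewrite Rplus_0_l, E0 in Hd.
  apply Rabs_def2 in Hd. destruct Hd as [Hd1 Hd2].
  assert (Hneg : Ef A B h < 0).
  { assert (Ef A B h = ((Ef A B h - 0)/h) * h) by (field; lra). rewrite H. nra. }
  assert (Hpos : 0 < Ef A B 1).
  { unfold Ef. pose proof (exp_pos (- (A * wf (B * 1)))). lra. }
  assert (Hc : continuity (Ef A B)).
  { intros x. apply continuity_pt_filterlim. apply (@ex_derive_continuous R_AbsRing R_NormedModule). unfold Ef, wf. auto_derive.
    pose proof (exp_pos (-(B*x))); lra. }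
  destruct (IVT (Ef A B) h 1 Hc ltac:(lra) Hneg Hpos) as [z [Hz Ez]].
  assert (Hz1 : z <> 1) by (intros ->; lra).
  exists z, (wf (B*z)). split; [lra|]. split. apply wf_bounds. nra.
  split. unfold Ef in Ez. lra. apply wf_eq.
Qed.

Definition clampc (y : R) := (Rabs (y + 1) - Rabs (y - 1)) / 2.
Definition Sw (T t : R) := clampc (2 * cos (PI * (t - T/4) / T)).

Lemma cont_mul (f g : R -> R) x : continuous f x -> continuous g x -> continuous (fun t => f t * g t) x.
Proof. intros. apply (@continuous_mult R_UniformSpace R_AbsRing f g x); auto. Qed.

Lemma Sw_cont T t : 0 < T -> continuous (Sw T) t.
Proof. intros HT. unfold Sw, clampc.
  apply continuity_pt_filterlim. unfold Rdiv at 1. apply continuity_pt_mult.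
  2: apply continuity_pt_const; intros ? ?; reflexivity.
  apply continuity_pt_minus; apply continuity_pt_filterlim.
  - apply (continuous_Rabs_comp (fun t => 2 * cos (PI * (t - T / 4) / T) + 1)).
    apply (@ex_derive_continuous R_AbsRing R_NormedModule); auto_derive; lra.
  - apply (continuous_Rabs_comp (fun t => 2 * cos (PI * (t - T / 4) / T) - 1)).
    apply (@ex_derive_continuous R_AbsRing R_NormedModule); auto_derive; lra.
Qed.

Lemma cos_half x : - (PI/4) <= x <= PI/4 -> 1/2 < cos x.
Proof. intros Hx. pose proof PI_RGT_0. rewrite <- cos_PI3.
  destruct (Rle_lt_dec 0 x).
  - apply cos_decreasing_1; lra.
  - rewrite <- (cos_neg x). apply cos_decreasing_1; lra. Qed.

Lemma Sw_one T t : 0 < T -> 0 <= t <= T/2 -> Sw T t = 1.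
Proof. intros HT Ht. unfold Sw, clampc. pose proof PI_RGT_0.
  assert (Hr : -(1/4) <= (t - T/4) / T <= 1/4).
  { assert (Er : t - T/4 = ((t - T/4) / T) * T) by (field; lra).
    set (r := (t - T/4) / T) in *. split; nra. }
  assert (1/2 < cos (PI * (t - T/4) / T)).
  { apply cos_half. unfold Rdiv in *. rewrite Rmult_assoc. split; nra. }
  rewrite !Rabs_pos_eq by lra. field. Qed.

Lemma Sw_mone T t : 0 < T -> T <= t <= 3*T/2 -> Sw T t = -1.
Proof. intros HT Ht. unfold Sw, clampc. pose proof PI_RGT_0.
  assert (Hr : 3/4 <= (t - T/4) / T <= 5/4).
  { assert (Er : t - T/4 = ((t - T/4) / T) * T) by (field; lra).
    set (r := (t - T/4) / T) in *. split; nra. }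
  assert (1/2 < cos (PI * (t - T/4) / T - PI)).
  { apply cos_half. unfold Rdiv in *. rewrite Rmult_assoc. split; nra. }
  assert (E : cos (PI * (t - T / 4) / T) = - cos (PI * (t - T/4) / T - PI)).
  { rewrite <- neg_cos. f_equal. ring. }
  rewrite E. rewrite Rabs_left, Rabs_left by lra. field. Qed.

Lemma Sw_per T t : 0 < T -> Sw T (t + 2 * T) = Sw T t.
Proof. intros HT. unfold Sw. f_equal. f_equal.
  replace (PI * (t + 2 * T - T / 4) / T) with (PI * (t - T / 4) / T + 2 * INR 1 * PI)
    by (simpl; field; lra).
  apply cos_period. Qed.

Definition kP T (alpha : R -> R) s := alpha s * Sw T s.
Definition kQ T (beta : R -> R) s := beta s * Sw T (s - T/2).
Definition Psi T alpha t := RInt (kP T alpha) 0 t.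
Definition Theta T beta t := RInt (kQ T beta) 0 t.
Definition usol T alpha (a b : R) t := (1 + a) * exp (- b * Psi T alpha t).
Definition vsol T beta (a b : R) t := (1 + b) * exp (- a * Theta T beta t).

Lemma per2 (f : R -> R) T : periodic f T -> forall t, f (t + 2*T) = f t.
Proof. intros P t. replace (t + 2*T) with ((t+T)+T) by ring. rewrite !P. reflexivity. Qed.
Lemma perback (f : R -> R) T : periodic f T -> forall t, f t = f (t - T).
Proof. intros P t. rewrite <- (P (t - T)). f_equal; ring. Qed.

Lemma kP_cont T alpha beta (H : hyps T alpha beta) t : continuous (kP T alpha) t.
Proof. unfold kP. apply cont_mul. apply (hca _ _ _ H). apply Sw_cont, (hT _ _ _ H). Qed.

Lemma kQ_cont T alpha beta (H : hyps T alpha beta) t : continuous (kQ T beta) t.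
Proof. unfold kQ. apply cont_mul. apply (hcb _ _ _ H).
  apply (continuous_comp (fun s => s - T/2) (Sw T)).
  apply (@ex_derive_continuous R_AbsRing R_NormedModule); auto_derive; auto.
  apply Sw_cont, (hT _ _ _ H). Qed.

Lemma int_per (k : R -> R) p : (forall x, continuous k x) -> (forall y, k (y + p) = k y) ->
  RInt k 0 p = 0 -> forall t, RInt k 0 (t + p) = RInt k 0 t.
Proof. intros Hc Hp H0 t. rewrite <- (RInt_ch k 0 p (t+p)) by auto. rewrite H0, Rplus_0_l.
  replace (RInt k p (t + p)) with (RInt k (0 + p) (t + p)) by (rewrite Rplus_0_l; reflexivity).
  rewrite <- RInt_shift by auto. apply RInt_ext. intros; apply Hp. Qed.

Lemma Psi_half T alpha beta (H : hyps T alpha beta) t : T/2 <= t <= T -> Psi T alpha t = RInt alpha 0 T.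
Proof. intros Ht. destruct (int_facts T alpha beta H) as [E1 _].
  pose proof (kP_cont T alpha beta H) as Kc.
  pose proof H as H'. destruct H' as [HT hca hcb hpa hpb ha0 hb0 hapos hbpos].
  unfold Psi. rewrite <- (RInt_ch _ 0 (T/2) t) by auto.
  rewrite (RInt_zero_on _ (T/2) t); [|lra|intros; unfold kP; rewrite ha0 by lra; ring].
  rewrite (RInt_eq_on _ alpha 0 (T/2)); [|lra|intros; unfold kP; rewrite Sw_one by lra; ring].
  rewrite E1. apply Rplus_0_r. Qed.

Lemma Psi_zero T alpha beta (H : hyps T alpha beta) t : 3*T/2 <= t <= 2*T -> Psi T alpha t = 0.
Proof. intros Ht. destruct (int_facts T alpha beta H) as [E1 _].
  pose proof (kP_cont T alpha beta H) as Kc.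
  pose proof (Psi_half T alpha beta H T) as PT.
  pose proof H as H'. destruct H' as [HT hca hcb hpa hpb ha0 hb0 hapos hbpos].
  unfold Psi in *. rewrite <- (RInt_ch _ 0 (3*T/2) t) by auto.
  rewrite <- (RInt_ch _ 0 T (3*T/2)) by auto. rewrite PT by lra.
  rewrite (RInt_zero_on _ (3*T/2) t); [|lra|intros; unfold kP; rewrite (perback alpha T hpa), ha0 by lra; ring].
  rewrite (RInt_eq_on _ (fun s => - alpha s) T (3*T/2)); [|lra|intros; unfold kP; rewrite Sw_mone by lra; ring].
  rewrite RInt_opp' by auto.
  replace (RInt alpha T (3*T/2)) with (RInt alpha (0 + T) (T/2 + T))
    by (rewrite Rplus_0_l; replace (T/2 + T) with (3*T/2) by field; reflexivity).
  rewrite <- RInt_shift by auto.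
  rewrite (RInt_ext (fun y => alpha (y + T)) alpha) by (intros; apply hpa).
  rewrite E1. Req. ring. Qed.

Lemma Theta_zero T alpha beta (H : hyps T alpha beta) t : 0 <= t <= T/2 -> Theta T beta t = 0.
Proof. intros Ht. pose proof H as H'. destruct H' as [HT hca hcb hpa hpb ha0 hb0 hapos hbpos].
  unfold Theta. apply RInt_zero_on. lra. intros; unfold kQ; rewrite hb0 by lra; ring. Qed.

Lemma Theta_B T alpha beta (H : hyps T alpha beta) t : T <= t <= 3*T/2 -> Theta T beta t = RInt beta 0 T.
Proof. intros Ht. destruct (int_facts T alpha beta H) as [_ [E2 _]].
  pose proof (kQ_cont T alpha beta H) as Kc.
  pose proof (Theta_zero T alpha beta H (T/2)) as P0.
  pose proof H as H'. destruct H' as [HT hca hcb hpa hpb ha0 hb0 hapos hbpos].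
  unfold Theta in *. rewrite <- (RInt_ch _ 0 T t) by auto.
  rewrite <- (RInt_ch _ 0 (T/2) T) by auto. rewrite P0 by lra.
  rewrite (RInt_zero_on _ T t); [|lra|intros; unfold kQ; rewrite (perback beta T hpb), hb0 by lra; ring].
  rewrite (RInt_eq_on _ beta (T/2) T); [|lra|intros; unfold kQ; rewrite Sw_one by lra; ring].
  rewrite E2. Req. ring. Qed.

Lemma Theta_2T T alpha beta (H : hyps T alpha beta) : Theta T beta (2*T) = 0.
Proof. destruct (int_facts T alpha beta H) as [_ [E2 _]].
  pose proof (kQ_cont T alpha beta H) as Kc.
  pose proof (Theta_B T alpha beta H (3*T/2)) as P0.
  pose proof H as H'. destruct H' as [HT hca hcb hpa hpb ha0 hb0 hapos hbpos].
  unfold Theta in *. rewrite <- (RInt_ch _ 0 (3*T/2) (2*T)) by auto. rewrite P0 by lra.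
  rewrite (RInt_eq_on _ (fun s => - beta s) (3*T/2) (2*T)); [|lra|intros; unfold kQ; rewrite Sw_mone by lra; ring].
  rewrite RInt_opp' by auto.
  replace (RInt beta (3*T/2) (2*T)) with (RInt beta (T/2 + T) (T + T))
    by (replace (T/2 + T) with (3*T/2) by field; replace (T + T) with (2*T) by ring; reflexivity).
  rewrite <- RInt_shift by auto.
  rewrite (RInt_ext (fun y => beta (y + T)) beta) by (intros; apply hpb).
  rewrite E2. Req. ring. Qed.

Lemma Psi_per T alpha beta (H : hyps T alpha beta) t : Psi T alpha (t + 2*T) = Psi T alpha t.
Proof. pose proof (hT _ _ _ H). apply int_per. apply (kP_cont T alpha beta H).
  intros y. unfold kP. rewrite (per2 alpha T (hpa _ _ _ H)), Sw_per; auto.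
  apply (Psi_zero T alpha beta H). lra. Qed.

Lemma Theta_per T alpha beta (H : hyps T alpha beta) t : Theta T beta (t + 2*T) = Theta T beta t.
Proof. pose proof (hT _ _ _ H). apply int_per. apply (kQ_cont T alpha beta H).
  intros y. unfold kQ. rewrite (per2 beta T (hpb _ _ _ H)).
  replace (y + 2 * T - T / 2) with ((y - T/2) + 2 * T) by ring. rewrite Sw_per; auto.
  apply (Theta_2T T alpha beta H). Qed.

Lemma RInt_pt (f : R -> R) a : RInt f a a = 0.
Proof. rewrite RInt_point. reflexivity. Qed.

Lemma sol_props T alpha beta (H : hyps T alpha beta) a b :
  eqs (RInt alpha 0 T) (RInt beta 0 T) a b ->
  is_solution alpha beta (usol T alpha a b) (vsol T beta a b) /\
  is_period_pair (usol T alpha a b) (vsol T beta a b) (2*T) /\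
  usol T alpha a b 0 = 1 + a /\ vsol T beta a b 0 = 1 + b.
Proof.
  intros [E1 E2].
  pose proof H as H'. destruct H' as [HT hca hcb hpa hpb ha0 hb0 hapos hbpos].
  assert (Pu : forall t, usol T alpha a b (t + 2*T) = usol T alpha a b t)
    by (intros; unfold usol; rewrite (Psi_per T alpha beta H); reflexivity).
  assert (Pv : forall t, vsol T beta a b (t + 2*T) = vsol T beta a b t)
    by (intros; unfold vsol; rewrite (Theta_per T alpha beta H); reflexivity).
  set (P := fun t => alpha t * (1 - vsol T beta a b t) = - b * (alpha t * Sw T t) /\
                     beta t * (-1 + usol T alpha a b t) = - a * (beta t * Sw T (t - T/2))).
  assert (HP : forall t, P t).
  { apply (periodic_reduce P (2*T)). lra.
    intros t. unfold P. rewrite Pu, Pv, (per2 alpha T hpa), (per2 beta T hpb), Sw_per by lra.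
    replace (t + 2 * T - T / 2) with ((t - T/2) + 2 * T) by ring. rewrite Sw_per by lra. tauto.
    intros t Ht. unfold P.
    destruct (Rle_lt_dec t (T/2)); [|destruct (Rle_lt_dec t T); [|destruct (Rle_lt_dec t (3*T/2))]].
    - unfold vsol. rewrite (Theta_zero T alpha beta H) by lra. rewrite (Sw_one T t) by lra.
      rewrite (hb0 t) by lra. rewrite Rmult_0_r, exp_0. split; ring.
    - unfold usol. rewrite (Psi_half T alpha beta H) by lra. rewrite (ha0 t) by lra.
      rewrite (Sw_one T (t - T/2)) by lra.
      replace (- b * RInt alpha 0 T) with (- (RInt alpha 0 T * b)) by ring. rewrite <- E1. split; ring.
    - unfold vsol. rewrite (Theta_B T alpha beta H) by lra. rewrite (Sw_mone T t) by lra.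
      rewrite (perback beta T hpb t), (hb0 (t - T)) by lra.
      replace (- a * RInt beta 0 T) with (- (RInt beta 0 T * a)) by ring. rewrite <- E2. split; ring.
    - unfold usol. rewrite (Psi_zero T alpha beta H) by lra.
      rewrite (perback alpha T hpa t), (ha0 (t - T)) by lra.
      rewrite (Sw_mone T (t - T/2)) by lra. rewrite Rmult_0_r, exp_0. split; ring. }
  split; [|split; [|split]].
  - intros t. destruct (HP t) as [P1 P2]. split.
    + apply (D_eq _ _ ((1+a) * ((-b * kP T alpha t) * exp (- b * Psi T alpha t)))).
      { unfold usol. apply (is_derive_scal (fun s => exp (- b * Psi T alpha s))).
        apply (D_exp (fun s => - b * Psi T alpha s)). apply (is_derive_scal (fun s => Psi T alpha s)).
        unfold Psi. apply RInt_deriv. apply (kP_cont T alpha beta H). }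
      replace (alpha t * usol T alpha a b t * (1 - vsol T beta a b t)) with
        ((alpha t * (1 - vsol T beta a b t)) * usol T alpha a b t) by ring.
      rewrite P1. unfold usol, kP. ring.
    + apply (D_eq _ _ ((1+b) * ((-a * kQ T beta t) * exp (- a * Theta T beta t)))).
      { unfold vsol. apply (is_derive_scal (fun s => exp (- a * Theta T beta s))).
        apply (D_exp (fun s => - a * Theta T beta s)). apply (is_derive_scal (fun s => Theta T beta s)).
        unfold Theta. apply RInt_deriv. apply (kQ_cont T alpha beta H). }
      replace (beta t * vsol T beta a b t * (-1 + usol T alpha a b t)) with
        ((beta t * (-1 + usol T alpha a b t)) * vsol T beta a b t) by ring.
      rewrite P2. unfold vsol, kQ. ring.
  - intros t. split; auto.
  - unfold usol, Psi. rewrite RInt_pt, Rmult_0_r, exp_0. ring.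
  - unfold vsol, Theta. rewrite RInt_pt, Rmult_0_r, exp_0. ring.
Qed.

Lemma exp_ge1 x : 0 <= x -> 1 <= exp x.
Proof. intros H. destruct (Req_dec x 0) as [->|Hn]. rewrite exp_0; lra.
  rewrite <- exp_0. left. apply exp_increasing. lra. Qed.

Lemma exp_le1 x : x <= 0 -> exp x <= 1.
Proof. intros H. destruct (Req_dec x 0) as [->|Hn]. rewrite exp_0; lra.
  rewrite <- exp_0. left. apply exp_increasing. lra. Qed.

Lemma exp_eq1 x y : 0 < x -> x = x * exp y -> y = 0.
Proof. intros Hx H. apply exp_inv. rewrite exp_0.
  apply (Rmult_eq_reg_l x). lra. lra. Qed.

Lemma sign_b A a b : 0 < A -> -1 < a < 1 -> 1 - a = (1 + a) * exp (- (A * b)) ->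
  (0 < a -> 0 < b) /\ (a < 0 -> b < 0) /\ (a = 0 -> b = 0).
Proof. intros HA Ha E. split; [|split].
  - intros Hp. destruct (Rle_lt_dec b 0) as [Hb|Hb]; auto.
    assert (1 <= exp (- (A * b))) by (apply exp_ge1; nra). nra.
  - intros Hn. destruct (Rle_lt_dec 0 b) as [Hb|Hb]; auto.
    assert (exp (- (A * b)) <= 1) by (apply exp_le1; nra). nra.
  - intros ->. assert (- (A * b) = 0).
    { apply exp_inv. rewrite exp_0. lra. }
    nra. Qed.

Lemma eqs_neg A B a b : eqs A B a b -> eqs A B (- a) (- b).
Proof. intros [E1 E2]. split.
  - replace (- (A * - b)) with (A * b) by ring.
    replace (1 - - a) with ((1 + a) * exp (- (A * b)) * exp (A * b)).
    rewrite <- E1. ring.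
    rewrite Rmult_assoc, <- exp_plus. replace (- (A * b) + A * b) with 0 by ring. rewrite exp_0. ring.
  - replace (- (B * - a)) with (B * a) by ring.
    replace (1 - - b) with ((1 + b) * exp (- (B * a)) * exp (B * a)).
    rewrite <- E2. ring.
    rewrite Rmult_assoc, <- exp_plus. replace (- (B * a) + B * a) with 0 by ring. rewrite exp_0. ring.
Qed.

Lemma minimal_gen T alpha beta (H : hyps T alpha beta) u v a b :
  is_solution alpha beta u v -> is_period_pair u v (2*T) ->
  eqs (RInt alpha 0 T) (RInt beta 0 T) a b -> 0 < a < 1 -> 0 < b < 1 ->
  u 0 = 1 + a -> v 0 = 1 + b ->
  forall q, 0 < q < 2*T -> ~ is_period_pair u v q.
Proof.
  intros Hs Hp [E1 E2] Ha Hb U0 V0 q Hq Hpq.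
  pose proof H as H'. destruct H' as [HT hca hcb hpa hpb ha0 hb0 hapos hbpos].
  destruct (int_facts T alpha beta H) as [F1 [F2 [PA PB]]].
  destruct (Hpq 0) as [Uq Vq]. rewrite Rplus_0_l in Uq, Vq.
  destruct (one_period T alpha beta H u v Hs) as [P1 P2].
  destruct (one_period_vals T alpha beta H u v Hs) as [UT VT].
  set (A := RInt alpha 0 T) in *. set (B := RInt beta 0 T) in *.
  assert (UT' : u T = 1 - a) by (rewrite UT, U0, V0, E1; f_equal; f_equal; ring).
  assert (VT' : v T = 1 - b) by (rewrite VT, UT', V0, E2; f_equal; f_equal; ring).
  pose proof (shift_sol T alpha beta u v hpa hpb Hs) as Hs2.
  destruct (one_period T alpha beta H _ _ Hs2) as [S1 S2]. cbv beta in S1, S2.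
  destruct (Rle_lt_dec q (T/2)); [|destruct (Rle_lt_dec q T); [|destruct (Rle_lt_dec q (3*T/2))]].
  - destruct (P1 q) as [_ Uq']. lra. rewrite Uq, U0, V0 in Uq'.
    assert (0 < RInt alpha 0 q).
    { apply RInt_gt_0. lra. intros; apply hapos; lra. intros; auto. }
    assert (exp ((1 - (1 + b)) * RInt alpha 0 q) < 1).
    { rewrite <- exp_0. apply exp_increasing. nra. }
    nra.
  - destruct (P2 q) as [Uq' _]. lra. destruct (P2 T) as [UT2 _]. lra.
    rewrite Uq, U0, <- UT2, UT' in Uq'. lra.
  - destruct (S1 (q - T)) as [Vq' _]. lra. replace (q - T + T) with q in Vq' by ring.
    rewrite Rplus_0_l in Vq'. rewrite Vq, V0, VT' in Vq'. lra.
  - destruct (S2 (q - T)) as [_ Vq']. lra. replace (q - T + T) with q in Vq' by ring.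
    destruct (S1 (T/2)) as [Vh _]. lra. rewrite Rplus_0_l in Vh.
    destruct (S2 T) as [Uh _]. lra.
    destruct (Hp 0) as [Pu _]. rewrite Rplus_0_l in Pu. replace (T + T) with (2 * T) in Uh by ring.
    rewrite Pu, U0 in Uh. rewrite <- Uh, Vh, VT', Vq, V0 in Vq'.
    assert (HG : RInt beta (T/2) (q - T) < B).
    { rewrite <- F2. rewrite <- (RInt_ch beta (T/2) (q - T) T) by auto.
      assert (0 < RInt beta (q - T) T).
      { apply RInt_gt_0. lra. intros; apply hbpos; lra. intros; auto. }
      lra. }
    assert (exp ((1 + a - 1) * RInt beta (T/2) (q - T)) < exp (a * B)).
    { apply exp_increasing. nra. }
    assert (Ek : (1 - b) * exp (a * B) = 1 + b).
    { rewrite E2, Rmult_assoc, <- exp_plus. replace (- (B * a) + a * B) with 0 by ring. rewrite exp_0. ring. }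
    nra.
Qed.

Theorem theorem2p1 (T : R) (alpha beta : R -> R) :
  0 < T ->
  (forall t, continuous alpha t) -> (forall t, continuous beta t) ->
  periodic alpha T -> periodic beta T ->
  (forall t, T / 2 <= t <= T -> alpha t = 0) ->
  (forall t, 0 <= t <= T / 2 -> beta t = 0) ->
  (forall t, 0 < t < T / 2 -> 0 < alpha t) ->
  (forall t, T / 2 < t < T -> 0 < beta t) ->
  RInt alpha 0 T * RInt beta 0 T > 4 ->
  exists (u1 v1 u2 v2 : R -> R),
    (coexistence_state alpha beta u1 v1 /\ minimal_period_pair u1 v1 (2 * T)) /\
    (coexistence_state alpha beta u2 v2 /\ minimal_period_pair u2 v2 (2 * T)) /\
    (u1, v1) <> (u2, v2) /\
    (forall u v : R -> R,
       coexistence_state alpha beta u v -> minimal_period_pair u v (2 * T) ->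
       (u, v) = (u1, v1) \/ (u, v) = (u2, v2)).
Proof.
  intros HT hca hcb hpa hpb ha0 hb0 hapos hbpos HAB.
  assert (H : hyps T alpha beta) by (constructor; auto).
  destruct (int_facts T alpha beta H) as [F1 [F2 [PA PB]]].
  destruct (exist_pos _ _ PA PB HAB) as [a [b [Ha [Hb Eab]]]].
  destruct (sol_props T alpha beta H a b Eab) as [Hs1 [Hp1 [U0 V0]]].
  destruct (one_period_vals T alpha beta H _ _ Hs1) as [UT VT].
  set (A := RInt alpha 0 T) in *. set (B := RInt beta 0 T) in *.
  set (u1 := usol T alpha a b) in *. set (v1 := vsol T beta a b) in *.
  assert (UT' : u1 T = 1 - a) by (destruct Eab as [E1 E2]; rewrite UT, U0, V0, E1; f_equal; f_equal; ring).
  assert (VT' : v1 T = 1 - b) by (destruct Eab as [E1 E2]; rewrite VT, UT', V0, E2; f_equal; f_equal; ring).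
  set (u2 := fun t => u1 (t + T)). set (v2 := fun t => v1 (t + T)).
  assert (Hs2 : is_solution alpha beta u2 v2) by (apply shift_sol; auto).
  assert (Hp2 : is_period_pair u2 v2 (2*T)).
  { intros t; unfold u2, v2. replace (t + 2*T + T) with ((t+T) + 2*T) by ring. apply Hp1. }
  assert (Pos1 : forall t, 0 < u1 t /\ 0 < v1 t).
  { intros t; unfold u1, v1, usol, vsol; split; apply Rmult_lt_0_compat; try lra; apply exp_pos. }
  assert (Min1 : minimal_period_pair u1 v1 (2*T)).
  { split; [lra|split; [auto|]]. apply (minimal_gen T alpha beta H u1 v1 a b); auto. }
  assert (Min2 : minimal_period_pair u2 v2 (2*T)).
  { split; [lra|split; [auto|]]. intros q Hq Hpq.
    apply (minimal_gen T alpha beta H u1 v1 a b Hs1 Hp1 Eab Ha Hb U0 V0 q Hq).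
    intros t. destruct (Hpq (t - T)) as [X Y]. unfold u2, v2 in X, Y.
    replace (t - T + q + T) with (t + q) in X, Y by ring.
    replace (t - T + T) with t in X, Y by ring. auto. }
  exists u1, v1, u2, v2.
  split; [split; [split; auto|auto]|].
  split; [split; [split; [auto| intros t; apply Pos1]|auto]|].
  split.
  - intros Heq. injection Heq as Eu Ev.
    assert (E0 : u1 0 = u2 0) by (rewrite Eu; reflexivity).
    unfold u2 in E0. rewrite Rplus_0_l, U0, UT' in E0. lra.
  - intros u v [Hs Hpos] [_ [Hp Hmin]].
    destruct (one_period_vals T alpha beta H u v Hs) as [UTa VTa].
    destruct (one_period_vals T alpha beta H _ _ (shift_sol T alpha beta u v hpa hpb Hs)) as [UTb VTb].
    cbv beta in UTb, VTb. rewrite Rplus_0_l in UTb, VTb.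
    destruct (Hp 0) as [P0u P0v]. rewrite Rplus_0_l in P0u, P0v.
    replace (T + T) with (2*T) in UTb, VTb by ring. rewrite P0u in UTb, VTb. rewrite P0v in VTb.
    fold A B in UTa, VTa, UTb, VTb.
    destruct (Hpos 0) as [pu0 pv0]. destruct (Hpos T) as [puT pvT].
    set (u0 := u 0) in *. set (v0 := v 0) in *. set (U1 := u T) in *. set (V1 := v T) in *.
    assert (HV : V1 = 2 - v0).
    { assert (X : u0 = u0 * exp ((1 - v0) * A + (1 - V1) * A))
        by (rewrite exp_plus, <- Rmult_assoc, <- UTa; exact UTb).
      apply exp_eq1 in X; [|lra]. nra. }
    assert (HU : U1 = 2 - u0).
    { assert (X : v0 = v0 * exp ((U1 - 1) * B + (u0 - 1) * B))
        by (rewrite exp_plus, <- Rmult_assoc, <- VTa; exact VTb).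
      apply exp_eq1 in X; [|lra]. nra. }
    assert (Eab' : eqs A B (u0 - 1) (v0 - 1)).
    { split.
      - replace (1 + (u0 - 1)) with u0 by ring. replace (- (A * (v0 - 1))) with ((1 - v0) * A) by ring.
        rewrite <- UTa. lra.
      - replace (1 + (v0 - 1)) with v0 by ring. replace (- (B * (u0 - 1))) with ((U1 - 1) * B) by (rewrite HU; ring).
        rewrite <- VTa. lra. }
    assert (Ba : -1 < u0 - 1 < 1) by lra.
    destruct (sign_b A (u0 - 1) (v0 - 1) PA Ba (proj1 Eab')) as [Sp [Sn Sz]].
    destruct (Rtotal_order (u0 - 1) 0) as [Hn|[Hz|Hpz]].
    + right. specialize (Sn Hn).
      destruct (uniq_pos A B a b (- (u0 - 1)) (- (v0 - 1)) PA PB Eab (eqs_neg _ _ _ _ Eab'))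
        as [Ea Eb]; try lra.
      destruct (determined T alpha beta H u v u2 v2 Hs Hs2 Hp Hp2) as [-> ->].
      unfold u2. rewrite Rplus_0_l, UT'. fold u0. lra.
      unfold v2. rewrite Rplus_0_l, VT'. fold v0. lra.
      reflexivity.
    + exfalso. specialize (Sz Hz).
      assert (Hc : is_solution alpha beta (fun _ => 1) (fun _ => 1)).
      { intros t. split; apply (D_eq _ _ 0); try apply (is_derive_const 1); ring. }
      destruct (determined T alpha beta H u v (fun _ => 1) (fun _ => 1) Hs Hc Hp) as [Eu Ev].
      intros t; split; reflexivity. fold u0; lra. fold v0; lra.
      apply (Hmin T). lra. rewrite Eu, Ev. intros t; split; reflexivity.
    + left. specialize (Sp Hpz).
      destruct (uniq_pos A B a b (u0 - 1) (v0 - 1) PA PB Eab Eab') as [Ea Eb]; try lra.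
      destruct (determined T alpha beta H u v u1 v1 Hs Hs1 Hp Hp1) as [-> ->].
      fold u0. lra. fold v0. lra. reflexivity.
Qed.
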